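(* Let $G$ be a simple graph on $n$ nodes with $m$ edges in which every node has degree at least $2$, let $\mathcal{B}$ be its non-backtracking matrix, $\mathcal{D}_{row}$ the diagonal matrix of row sums of $\mathcal{B}$, and $\mathcal{T}=\mathcal{D}_{row}^{-1}\mathcal{B}$. Let $\lambda\in\mathbb{C}\setminus\mathbb{R}$ be an eigenvalue of $\mathcal{T}$ and $z\in\mathbb{C}^{2m}$ a right eigenvector: $\mathcal{T}z=\lambda z$. Then $\overline{\breve z}$ is a left eigenvector of $\mathcal{T}$ with the same eigenvalue $\lambda$, i.e. $\mathcal{T}^*\,\overline{\breve z}=\bar\lambda\,\overline{\breve z}$.
   Context: Each edge $\{i,j\}$ of $G$ is considered in both orientations, giving the set $E^{\rightarrow}$ of $2m$ oriented edges. For an oriented edge $e=[i,j]$, $\mathrm{in}(e)=i$, $\mathrm{out}(e)=j$, and $e^{-1}=[j,i]$. The non-backtracking matrix $\mathcal{B}=(b_{ef})_{e,f\in E^{\rightarrow}}$ has $b_{ef}=1$ if $\mathrm{out}(e)=\mathrm{in}(f)$ and $f\neq e^{-1}$, else $0$. The diagonal entry of $\mathcal{D}_{row}$ at $e=[i,j]$ is $d_j-1$. For $x\in\mathbb{C}^{2m}$, $\breve x_e=x_{e^{-1}}$; the bar denotes entrywise complex conjugation and ${}^*$ the conjugate transpose. A vector $v$ is a left eigenvector of $A$ with eigenvalue $\lambda$ if $v^*A=\lambda v^*$. *)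

(* Defs.v *)
From HB Require Import structures.
From mathcomp Require Import all_boot all_order all_algebra.
Set Implicit Arguments. Unset Strict Implicit. Unset Printing Implicit Defensive.
Import Order.TTheory GRing.Theory Num.Theory.
Local Open Scope ring_scope.

Record sgraph (V : finType) := SGraph {
  adj : rel V;
  adj_sym : symmetric adj;
  adj_irr : irreflexive adj }.

Section Darts.
Variables (V : finType) (G : sgraph V).

Definition deg (v : V) : nat := #|[set w | adj G v w]|.

Definition dart := {p : V * V | adj G p.1 p.2}.

Definition din (e : dart) : V := (val e).1.
Definition dout (e : dart) : V := (val e).2.

Lemma rev_dart_proof (e : dart) : adj G (val e).2 (val e).1.
Proof. by rewrite adj_sym; case: e. Qed.

Definition rev_dart (e : dart) : dart :=
  exist _ ((val e).2, (val e).1) (rev_dart_proof e).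

Definition nd := #|{: dart}|.

Variable C : numClosedFieldType.

Definition nbm : 'M[C]_nd :=
  \matrix_(i, j) (((dout (enum_val i) == din (enum_val j))
                   && (enum_val j != rev_dart (enum_val i)))%:R).

Definition Drow : 'M[C]_nd := diag_mx (\row_i (\sum_j nbm i j)).

Definition Tmat : 'M[C]_nd := invmx Drow *m nbm.

Definition breve (x : 'cV[C]_nd) : 'cV[C]_nd :=
  \col_i x (enum_rank (rev_dart (enum_val i))) 0.

End Darts.

Definition cconjmx (C : numClosedFieldType) m n (A : 'M[C]_(m, n)) :=
  map_mx (fun x => x^*) A.
Definition cadjmx (C : numClosedFieldType) m n (A : 'M[C]_(m, n)) :=
  (cconjmx A)^T.

(* Main.v *)
Require Import Defs.
From HB Require Import structures.
From mathcomp Require Import all_boot all_order all_algebra.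
Set Implicit Arguments. Unset Strict Implicit. Unset Printing Implicit Defensive.
Import Order.TTheory GRing.Theory Num.Theory.
Local Open Scope ring_scope.

Section Aux.
Variables (C : numClosedFieldType) (V : finType) (G : sgraph V).

Local Notation ev i := (@enum_val (dart G) (mem predT) i).
Definition rv (i : 'I_(nd G)) : 'I_(nd G) := enum_rank (rev_dart (enum_val i)).

Lemma rev_dartK : involutive (@rev_dart V G).
Proof. by move=> e; apply: val_inj; case: e => [[a b] h]. Qed.

Lemma rvK : involutive rv.
Proof. by move=> i; rewrite /rv enum_rankK rev_dartK enum_valK. Qed.

Lemma ev_rv i : enum_val (rv i) = rev_dart (enum_val i).
Proof. by rewrite /rv enum_rankK. Qed.

Lemma nbm_sym i j : nbm G C i j = nbm G C (rv j) (rv i).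
Proof.
rewrite !mxE !ev_rv /dout /din /=.
by rewrite rev_dartK [din _ == _]eq_sym [rev_dart _ == _]eq_sym.
Qed.

Definition rs (i : 'I_(nd G)) : C := \sum_j nbm G C i j.

Lemma rsE i : rs i = \sum_j ((dout (ev i) == din (ev j)) %:R : C) - 1.
Proof.
rewrite /rs.
have -> : \sum_j nbm G C i j = \sum_j (((dout (ev i) == din (ev j))%:R : C)
   - ((j == rv i)%:R : C)).
  apply: eq_bigr => j _; rewrite mxE.
  have -> : (ev j != rev_dart (ev i)) = (j != rv i).
    by rewrite /rv -(inj_eq enum_val_inj) enum_rankK.
  case: (eqVneq j (rv i)) => [->|Hj].
    rewrite /= andbF ev_rv.
    have -> : din (rev_dart (ev i)) = dout (ev i) by [].
    by rewrite eqxx subrr.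
  by rewrite andbT subr0.
rewrite sumrB; congr (_ - _).
rewrite (bigD1 (rv i)) //= ?eqxx big1 ?addr0 // => j /negbTE -> //.
Qed.

Lemma rs_eq f e : nbm G C f e != 0 -> rs f = rs (rv e).
Proof.
rewrite mxE; case/boolP: (dout (ev f) == din (ev e)) => [/eqP H _|]; last by rewrite /= eqxx.
rewrite !rsE ev_rv H.
have -> : dout (rev_dart (ev e)) = din (ev e) by [].
by [].
Qed.

Lemma invDrow : exists h : C -> C,
  invmx (Drow G C) = diag_mx (\row_i h (rs i)).
Proof.
case/boolP: (Drow G C \in unitmx) => U; last first.
  by exists id; rewrite (invmx_out U).
exists GRing.inv.
have Hnz : forall i, rs i != 0.
  move=> i; move: U; rewrite unitmxE unitfE /Drow det_diag.
  by rewrite (bigD1 i) //= mulf_eq0 negb_or mxE => /andP [].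
have H1 : Drow G C *m diag_mx (\row_i (rs i)^-1) = 1%:M.
  apply/matrixP => a b; rewrite mul_diag_mx !mxE.
  case: eqP => [->|_]; rewrite ?mulr0n ?mulr0 //.
  by rewrite /= mulr1n -/(rs b) mulfV ?Hnz.
rewrite -[invmx _]mulmx1 -H1 mulKmx //.
Qed.

Lemma Tmat_sym f e : Tmat G C f e = Tmat G C (rv e) (rv f).
Proof.
have [h Hh] := invDrow.
have E a b : Tmat G C a b = h (rs a) * nbm G C a b.
  by rewrite /Tmat Hh mul_diag_mx mxE [X in X * _]mxE.
rewrite !E -nbm_sym.
case: (eqVneq (nbm G C f e) 0) => [->|H]; first by rewrite !mulr0.
by rewrite (rs_eq H).
Qed.

Lemma Tmat_breve x : (Tmat G C)^T *m breve x = breve (Tmat G C *m x).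
Proof.
have := Tmat_sym; move: (Tmat G C) => T TS.
apply/matrixP => i k; rewrite !mxE (ord1 k).
rewrite (reindex_inj (can_inj rvK)) /=.
apply: eq_bigr => j _; rewrite !mxE.
rewrite -[enum_rank (rev_dart (enum_val (rv j)))]/(rv (rv j)) -[enum_rank (rev_dart (enum_val i))]/(rv i).
by rewrite TS !rvK.
Qed.

Lemma breveZ (a : C) (x : 'cV[C]_(nd G)) : breve (a *: x) = a *: breve x.
Proof. by apply/matrixP => i k; rewrite !mxE. Qed.

End Aux.

Theorem mainTheorem3 (C : numClosedFieldType) (V : finType) (G : sgraph V)
  (hdeg : forall v : V, (2 <= deg G v)%N)
  (lam : C) (hlam : lam \notin Num.real)
  (z : 'cV[C]_(nd G)) (hz : z != 0)
  (heig : Tmat G C *m z = lam *: z) :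
  cadjmx (Tmat G C) *m cconjmx (breve z) = lam^* *: cconjmx (breve z).
Proof.
rewrite /cadjmx /cconjmx.
have -> : (map_mx (fun x : C => x^*) (Tmat G C))^T = map_mx (fun x : C => x^*) (Tmat G C)^T.
  by apply/matrixP => i j; rewrite !mxE.
rewrite -map_mxM Tmat_breve heig breveZ.
by rewrite map_mxZ.
Qed.
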